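(* Let $\Gamma\cup\{A\}\subseteq\mathcal{L}_\infty$ and let $t$ be the translation described in the context. (i) If $\Gamma^t\vdash_{\mathbf{K4}(Q)}A^t$, then $\Gamma\vdash_{\mathbf{K4}_h}A$. (ii) If $\Gamma^t\vdash_{\mathbf{S4}(Q)}A^t$, then $\Gamma\vdash_{\mathbf{S4}_h}A$.
   Context: The language $\mathcal{L}_\infty$ consists of modal formulas built from propositional atoms, $\bot,\top$, the connectives $\neg,\wedge,\vee,\rightarrow$ and unary modalities $\Box_n$ ($n\in\mathbb{N}$), with the restriction that $\Box_n A$ is a formula only if $n$ is strictly greater than the index of every box occurring in $A$. Axiom instances are only those that are $\mathcal{L}_\infty$-formulas. Axiom schemes (for all $n\ge0$): $\mathbf{H}$: $\Box_n A\rightarrow\Box_{n+1}A$; $\mathbf{K}_h$: $\Box_n(A\rightarrow B)\rightarrow(\Box_nA\rightarrow\Box_nB)$; $\mathbf{4}_h$: $\Box_nA\rightarrow\Box_{n+1}\Box_nA$; $\mathbf{T}_h$: $\Box_nA\rightarrow A$. For a set $X$ of schemes, $L(X)$ is the least set of $\mathcal{L}_\infty$-formulas containing all classical propositional tautologies and all instances of the schemes in $X$, closed under modus ponens and the rule: from $A$ infer $\Box_nA$ for any $n$ greater than all box indices in $A$. $\mathbf{K4}_h=L(\mathbf{H},\mathbf{K}_h,\mathbf{4}_h)$, $\mathbf{S4}_h=L(\mathbf{H},\mathbf{K}_h,\mathbf{4}_h,\mathbf{T}_h)$. For a set $\Gamma$, $\Gamma\vdash_LA$ means $\bigwedge\Delta\rightarrow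 A\in L$ for some finite $\Delta\subseteq\Gamma$ (analogously for the ordinary logics below). Let $Q=\{q_n\}_{n\ge0}$ be new propositional atoms not occurring in $\mathcal{L}_\infty$-formulas, and let $\mathcal{L}_\Box(Q)$ be the ordinary unimodal language (single modality $\Box$) over the atoms together with $Q$; $\mathbf{K4}(Q)$ and $\mathbf{S4}(Q)$ are the usual modal logics $\mathbf{K4}$ and $\mathbf{S4}$ in this language. The translation $t:\mathcal{L}_\infty\to\mathcal{L}_\Box(Q)$: $p^t=p$ for atoms, $t$ commutes with $\neg,\wedge,\vee,\rightarrow$, and $(\Box_nA)^t=\Box(\bigwedge_{i=0}^n q_i\rightarrow A^t)$. $\Gamma^t=\{B^t:B\in\Gamma\}$. *)

(* Defs.v *)
From Stdlib Require Import List Arith.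
Import ListNotations.

Inductive hform : Type :=
| HAtom : nat -> hform
| HBot : hform
| HTop : hform
| HNeg : hform -> hform
| HAnd : hform -> hform -> hform
| HOr : hform -> hform -> hform
| HImp : hform -> hform -> hform
| HBox : nat -> hform -> hform.

Fixpoint boxes_below (n : nat) (A : hform) : Prop :=
  match A with
  | HAtom _ | HBot | HTop => True
  | HNeg B => boxes_below n B
  | HAnd B C | HOr B C | HImp B C => boxes_below n B /\ boxes_below n C
  | HBox m B => m < n /\ boxes_below n B
  end.

(* wf A : A is an L_infty-formula *)
Fixpoint wf (A : hform) : Prop :=
  match A with
  | HAtom _ | HBot | HTop => True
  | HNeg B => wf B
  | HAnd B C | HOr B C | HImp B C => wf B /\ wf C
  | HBox n B => wf B /\ boxes_below n B
  end.

(* classical propositional tautologies: true under every valuation of the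
   atoms and of the boxed subformulas (treated as propositional atoms) *)
Fixpoint heval (v : hform -> bool) (A : hform) : bool :=
  match A with
  | HAtom _ => v A
  | HBot => false
  | HTop => true
  | HNeg B => negb (heval v B)
  | HAnd B C => heval v B && heval v C
  | HOr B C => heval v B || heval v C
  | HImp B C => implb (heval v B) (heval v C)
  | HBox _ _ => v A
  end.

Definition htaut (A : hform) : Prop := forall v, heval v A = true.

Inductive axH : hform -> Prop :=
  axH_i : forall n A, axH (HImp (HBox n A) (HBox (S n) A)).
Inductive axK : hform -> Prop :=
  axK_i : forall n A B,
    axK (HImp (HBox n (HImp A B)) (HImp (HBox n A) (HBox n B))).
Inductive ax4 : hform -> Prop :=
  ax4_i : forall n A, ax4 (HImp (HBox n A) (HBox (S n) (HBox n A))).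
Inductive axT : hform -> Prop :=
  axT_i : forall n A, axT (HImp (HBox n A) A).

(* L(X): X is given as a predicate selecting the admitted axiom instances *)
Inductive Lh (X : hform -> Prop) : hform -> Prop :=
| Lh_taut : forall A, wf A -> htaut A -> Lh X A
| Lh_ax : forall A, wf A -> X A -> Lh X A
| Lh_mp : forall A B, Lh X A -> Lh X (HImp A B) -> Lh X B
| Lh_nec : forall n A, Lh X A -> boxes_below n A -> Lh X (HBox n A).

Definition K4h_axioms (A : hform) : Prop := axH A \/ axK A \/ ax4 A.
Definition S4h_axioms (A : hform) : Prop := axH A \/ axK A \/ ax4 A \/ axT A.

Definition K4h : hform -> Prop := Lh K4h_axioms.
Definition S4h : hform -> Prop := Lh S4h_axioms.

Fixpoint hbigand (l : list hform) : hform :=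
  match l with
  | [] => HTop
  | B :: l' => HAnd B (hbigand l')
  end.

Definition hderives (L : hform -> Prop) (Gamma : hform -> Prop) (A : hform) : Prop :=
  exists Delta : list hform,
    (forall B, In B Delta -> Gamma B) /\ L (HImp (hbigand Delta) A).

(* atoms: the original atoms P p, and the new atoms Q n (= q_n) *)
Inductive uatom : Type := PA : nat -> uatom | QA : nat -> uatom.

Inductive mform : Type :=
| MAtom : uatom -> mform
| MBot : mform
| MTop : mform
| MNeg : mform -> mform
| MAnd : mform -> mform -> mform
| MOr : mform -> mform -> mform
| MImp : mform -> mform -> mform
| MBox : mform -> mform.

Fixpoint meval (v : mform -> bool) (A : mform) : bool :=
  match A with
  | MAtom _ => v A
  | MBot => false
  | MTop => true
  | MNeg B => negb (meval v B)
  | MAnd B C => meval v B && meval v C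
  | MOr B C => meval v B || meval v C
  | MImp B C => implb (meval v B) (meval v C)
  | MBox _ => v A
  end.

Definition mtaut (A : mform) : Prop := forall v, meval v A = true.

Inductive maxK : mform -> Prop :=
  maxK_i : forall A B, maxK (MImp (MBox (MImp A B)) (MImp (MBox A) (MBox B))).
Inductive max4 : mform -> Prop :=
  max4_i : forall A, max4 (MImp (MBox A) (MBox (MBox A))).
Inductive maxT : mform -> Prop :=
  maxT_i : forall A, maxT (MImp (MBox A) A).

Inductive Lm (X : mform -> Prop) : mform -> Prop :=
| Lm_taut : forall A, mtaut A -> Lm X A
| Lm_ax : forall A, X A -> Lm X A
| Lm_mp : forall A B, Lm X A -> Lm X (MImp A B) -> Lm X B
| Lm_nec : forall A, Lm X A -> Lm X (MBox A).

Definition K4Q : mform -> Prop := Lm (fun A => maxK A \/ max4 A).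
Definition S4Q : mform -> Prop := Lm (fun A => maxK A \/ max4 A \/ maxT A).

Fixpoint mbigand (l : list mform) : mform :=
  match l with
  | [] => MTop
  | B :: l' => MAnd B (mbigand l')
  end.

Definition mderives (L : mform -> Prop) (Gamma : mform -> Prop) (A : mform) : Prop :=
  exists Delta : list mform,
    (forall B, In B Delta -> Gamma B) /\ L (MImp (mbigand Delta) A).

Fixpoint qconj (n : nat) : mform :=
  match n with
  | O => MAtom (QA 0)
  | S k => MAnd (qconj k) (MAtom (QA (S k)))
  end.

Fixpoint tr (A : hform) : mform :=
  match A with
  | HAtom p => MAtom (PA p)
  | HBot => MBot
  | HTop => MTop
  | HNeg B => MNeg (tr B)
  | HAnd B C => MAnd (tr B) (tr C)
  | HOr B C => MOr (tr B) (tr C)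
  | HImp B C => MImp (tr B) (tr C)
  | HBox n B => MBox (MImp (qconj n) (tr B))
  end.

Definition trset (Gamma : hform -> Prop) : mform -> Prop :=
  fun C => exists B, Gamma B /\ C = tr B.

(* Main.v *)
Require Import Defs.
From Stdlib Require Import List Arith Lia Bool.
Import ListNotations.

Definition rfl (b : bool) (x : hform) : hform := if b then x else HTop.

Fixpoint bigbox (f : nat -> hform) (k : nat) : hform :=
  match k with
  | O => HTop
  | S l => HAnd (bigbox f l) (HBox l (f l))
  end.

Fixpoint st (b : bool) (C : mform) (k : nat) {struct C} : hform :=
  match C with
  | MAtom (PA p) => HAtom p
  | MAtom (QA i) => if Nat.leb i k then HTop else HBot
  | MBot => HBot
  | MTop => HTop
  | MNeg D => HNeg (st b D k)
  | MAnd D E => HAnd (st b D k) (st b E k)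
  | MOr D E => HOr (st b D k) (st b E k)
  | MImp D E => HImp (st b D k) (st b E k)
  | MBox D => HAnd (bigbox (st b D) k) (rfl b (st b D k))
  end.

Lemma bb_mono : forall A n m, boxes_below n A -> n <= m -> boxes_below m A.
Proof. induction A; simpl; intuition eauto; lia. Qed.

Lemma bigbox_prop : forall f, (forall l, wf (f l) /\ boxes_below l (f l)) ->
  forall k, wf (bigbox f k) /\ boxes_below k (bigbox f k).
Proof.
  intros f Hf k; induction k; simpl; auto.
  destruct IHk; destruct (Hf k); repeat split; auto; try lia;
  eapply bb_mono; eauto.
Qed.

Lemma st_prop : forall b C k, wf (st b C k) /\ boxes_below k (st b C k).
Proof.
  intros b C; induction C; intro k; simpl.
  - destruct u; simpl; [tauto|destruct (Nat.leb n k); simpl; tauto].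
  - tauto.
  - tauto.
  - apply IHC.
  - destruct (IHC1 k), (IHC2 k); tauto.
  - destruct (IHC1 k), (IHC2 k); tauto.
  - destruct (IHC1 k), (IHC2 k); tauto.
  - destruct (bigbox_prop (st b C) IHC k). destruct (IHC k).
    destruct b; simpl; tauto.
Qed.

Lemma st_wf b C k : wf (st b C k).
Proof. apply st_prop. Qed.
Lemma st_bb b C k m : k <= m -> boxes_below m (st b C k).
Proof. intros; eapply bb_mono; [apply st_prop|auto]. Qed.

Lemma hq (v : hform -> bool) (c : bool) : heval v (if c then HTop else HBot) = c.
Proof. destruct c; reflexivity. Qed.

Lemma heval_qconj : forall b v n l, heval v (st b (qconj n) l) = Nat.leb n l.
Proof.
  intros b v n l; induction n.
  - exact (hq v (Nat.leb 0 l)).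
  - change (st b (qconj (S n)) l) with
      (HAnd (st b (qconj n) l) (if Nat.leb (S n) l then HTop else HBot)).
    change (heval v (HAnd (st b (qconj n) l) (if Nat.leb (S n) l then HTop else HBot)))
      with (heval v (st b (qconj n) l) && heval v (if Nat.leb (S n) l then HTop else HBot)).
    rewrite IHn, hq.
    destruct (Nat.leb (S n) l) eqn:E.
    + apply Nat.leb_le in E. assert (Nat.leb n l = true) by (apply Nat.leb_le; lia).
      rewrite H; auto.
    + apply andb_false_r.
Qed.

Lemma Lh_wf : forall X A, Lh X A -> wf A.
Proof. intros X A H; induction H; simpl in *; tauto. Qed.

Ltac taut := let v := fresh "v" in intro v; simpl;
  repeat match goal with
  | |- context [heval v ?X] => destruct (heval v X)
  | |- context [v ?X] => destruct (v X)
  end; reflexivity.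

Section Hilbert.
Variable X : hform -> Prop.
Let P := Lh X.
Hypothesis XH : forall n A, wf A -> boxes_below n A -> X (HImp (HBox n A) (HBox (S n) A)).
Hypothesis XK : forall n A B, wf A -> wf B -> boxes_below n A -> boxes_below n B ->
  X (HImp (HBox n (HImp A B)) (HImp (HBox n A) (HBox n B))).
Hypothesis X4 : forall n A, wf A -> boxes_below n A -> X (HImp (HBox n A) (HBox (S n) (HBox n A))).

Lemma taut_list : forall l C, Forall P l -> wf C -> htaut (fold_right HImp C l) -> P C.
Proof.
  intros l C Hl HC Ht.
  assert (W : wf (fold_right HImp C l)).
  { clear Ht; induction Hl; simpl; auto. split; auto. eapply Lh_wf; eauto. }
  assert (H0 : P (fold_right HImp C l)) by (apply Lh_taut; auto).
  clear Ht W. induction Hl; simpl in *; auto.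
  apply IHHl. apply (Lh_mp X x); auto.
Qed.

Lemma taut0 C : wf C -> htaut C -> P C.
Proof. intros; apply (taut_list []); auto. Qed.
Lemma taut1 A C : P A -> wf C -> htaut (HImp A C) -> P C.
Proof. intros; apply (taut_list [A]); auto. Qed.
Lemma taut2 A B C : P A -> P B -> wf C -> htaut (HImp A (HImp B C)) -> P C.
Proof. intros; apply (taut_list [A;B]); auto. Qed.
Lemma taut3 A B D C : P A -> P B -> P D -> wf C -> htaut (HImp A (HImp B (HImp D C))) -> P C.
Proof. intros; apply (taut_list [A;B;D]); auto. Qed.
Lemma taut4 A B D E C : P A -> P B -> P D -> P E -> wf C ->
  htaut (HImp A (HImp B (HImp D (HImp E C)))) -> P C.
Proof. intros; apply (taut_list [A;B;D;E]); auto. Qed.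


Definition good (f : nat -> hform) := forall l, wf (f l) /\ boxes_below l (f l).
Lemma gw f : good f -> forall l, wf (f l). Proof. intros H l; apply H. Qed.
Lemma gb f : good f -> forall l m, l <= m -> boxes_below m (f l).
Proof. intros H l m Hm; eapply bb_mono; [apply H|auto]. Qed.
Lemma bw f : good f -> forall k, wf (bigbox f k). Proof. intros; apply bigbox_prop; auto. Qed.
Lemma bbb f : good f -> forall k m, k <= m -> boxes_below m (bigbox f k).
Proof. intros; eapply bb_mono; [apply bigbox_prop; auto|auto]. Qed.

Ltac wfs Hf := simpl; repeat split; try lia;
  repeat first [ assumption | apply (gw _ Hf) | apply (gb _ Hf); lia
               | apply (bw _ Hf) | apply (bbb _ Hf); lia ].

Lemma nec A n : P A -> boxes_below n A -> P (HBox n A).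
Proof. intros; apply Lh_nec; auto. Qed.

Lemma boxmono A B n : P (HImp A B) -> boxes_below n A -> boxes_below n B ->
  P (HImp (HBox n A) (HBox n B)).
Proof.
  intros H HA HB. pose proof (Lh_wf _ _ H) as [WA WB].
  apply (Lh_mp X (HBox n (HImp A B))). apply nec; simpl; auto.
  apply Lh_ax. simpl; tauto. apply XK; auto.
Qed.

Lemma boxand A B n : wf A -> wf B -> boxes_below n A -> boxes_below n B ->
  P (HImp (HBox n A) (HImp (HBox n B) (HBox n (HAnd A B)))).
Proof.
  intros.
  assert (h1 : P (HImp A (HImp B (HAnd A B)))) by (apply taut0; [simpl; tauto| taut]).
  assert (h2 := boxmono _ _ n h1 ltac:(auto) ltac:(simpl; tauto)).
  assert (h3 : P (HImp (HBox n (HImp B (HAnd A B))) (HImp (HBox n B) (HBox n (HAnd A B))))).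
  { apply Lh_ax. simpl; tauto. apply XK; simpl; tauto. }
  apply (taut2 _ _ _ h2 h3). simpl; tauto. taut.
Qed.

Lemma Hiter A n : wf A -> boxes_below n A -> forall d, P (HImp (HBox n A) (HBox (n + d) A)).
Proof.
  intros WA BA d; induction d.
  - rewrite Nat.add_0_r. apply taut0; [simpl; tauto|taut].
  - assert (h : P (HImp (HBox (n + d) A) (HBox (S (n + d)) A))).
    { apply Lh_ax. simpl; repeat split; auto; eapply bb_mono; eauto; lia. apply XH; auto.
      eapply bb_mono; eauto; lia. }
    rewrite Nat.add_succ_r. apply (taut2 _ _ _ IHd h).
    simpl; repeat split; auto; eapply bb_mono; eauto; lia. taut.
Qed.

Lemma Hiter' A n m : n <= m -> wf A -> boxes_below n A -> P (HImp (HBox n A) (HBox m A)).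
Proof. intros. replace m with (n + (m - n)) by lia. apply Hiter; auto. Qed.

Lemma box_up f : good f -> forall k m, k <= m -> P (HImp (bigbox f k) (HBox m (bigbox f k))).
Proof.
  intros Hf k; induction k; intros m Hm.
  - apply taut1 with (A := HBox m HTop). apply nec; [apply taut0; [simpl; auto|taut]|simpl; auto].
    simpl; auto. taut.
  - simpl bigbox.
    assert (h1 := IHk m ltac:(lia)).
    assert (h2 : P (HImp (HBox k (f k)) (HBox (S k) (HBox k (f k))))).
    { apply Lh_ax. wfs Hf. apply X4. apply (gw _ Hf). apply (gb _ Hf); lia. }
    assert (h3 := Hiter' (HBox k (f k)) (S k) m ltac:(lia) ltac:(wfs Hf) ltac:(wfs Hf)).
    assert (h4 := boxand (bigbox f k) (HBox k (f k)) m ltac:(wfs Hf) ltac:(wfs Hf)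
                    ltac:(wfs Hf) ltac:(wfs Hf)).
    apply (taut4 _ _ _ _ _ h1 h2 h3 h4). wfs Hf. taut.
Qed.

Lemma bigbox_elim f : good f -> forall k j, j < k -> P (HImp (bigbox f k) (HBox j (f j))).
Proof.
  intros Hf k; induction k; intros j Hj; [lia|].
  simpl bigbox. destruct (Nat.eq_dec j k).
  - subst. apply taut0. wfs Hf. taut.
  - assert (h := IHk j ltac:(lia)). apply (taut1 _ _ h). wfs Hf. taut.
Qed.

Lemma bigbox_intro f H : good f -> wf H -> forall k,
  (forall j, j < k -> P (HImp H (HBox j (f j)))) -> P (HImp H (bigbox f k)).
Proof.
  intros Hf WH k; induction k; intros Hj.
  - apply taut0. simpl; auto. taut.
  - simpl bigbox. assert (h1 := IHk ltac:(intros; apply Hj; lia)).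
    assert (h2 := Hj k ltac:(lia)). apply (taut2 _ _ _ h1 h2). wfs Hf. taut.
Qed.

Lemma bigbox_nec f : good f -> (forall l, P (f l)) -> forall k, P (bigbox f k).
Proof.
  intros Hf Hp k; induction k.
  - apply taut0; simpl; auto; taut.
  - simpl. assert (h := nec _ k (Hp k) ltac:(wfs Hf)).
    apply (taut2 _ _ _ IHk h). wfs Hf. taut.
Qed.

Lemma LK f g : good f -> good g -> forall k,
  P (HImp (bigbox (fun l => HImp (f l) (g l)) k) (HImp (bigbox f k) (bigbox g k))).
Proof.
  intros Hf Hg k; induction k.
  - apply taut0; simpl; auto; taut.
  - simpl bigbox.
    assert (h : P (HImp (HBox k (HImp (f k) (g k))) (HImp (HBox k (f k)) (HBox k (g k))))).
    { apply Lh_ax. wfs Hf; wfs Hg. apply XK; [apply (gw _ Hf)|apply (gw _ Hg)|apply (gb _ Hf); lia|apply (gb _ Hg); lia]. }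
    apply (taut2 _ _ _ IHk h).
    assert (good (fun l => HImp (f l) (g l))) as Hfg.
    { intro l; simpl; repeat split; try apply Hf; try apply Hg. }
    wfs Hf; wfs Hg; wfs Hfg. taut.
Qed.


Variable b : bool.
Hypothesis XT : b = true -> forall n A, wf A -> boxes_below n A -> X (HImp (HBox n A) A).

Lemma rfl_good f : good f -> good (fun l => rfl b (f l)).
Proof. intros Hf l; destruct b; simpl; auto. Qed.

Lemma L4 f : good f -> forall k,
  P (HImp (bigbox f k) (bigbox (fun l => HAnd (bigbox f l) (rfl b (f l))) k)).
Proof.
  intros Hf k; induction k.
  - apply taut0; simpl; auto; taut.
  - simpl bigbox.
    assert (Hr := rfl_good f Hf).
    assert (Hg : good (fun l => HAnd (bigbox f l) (rfl b (f l)))).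
    { intro l; simpl; repeat split; try apply (bw _ Hf); try apply (bbb _ Hf); auto; apply Hr. }
    assert (h1 := box_up f Hf k k (le_n _)).
    assert (h2 : P (HImp (HAnd (bigbox f k) (HBox k (f k))) (HBox k (rfl b (f k))))).
    { destruct b; simpl.
      - apply taut0. wfs Hf. taut.
      - apply (taut1 _ _ (nec (HTop) k ltac:(apply taut0; simpl; auto; taut) I)). wfs Hf. taut. }
    assert (h3 := boxand (bigbox f k) (rfl b (f k)) k ltac:(wfs Hf) ltac:(apply (gw _ Hr))
                 ltac:(wfs Hf) ltac:(apply (gb _ Hr); lia)).
    apply (taut4 _ _ _ _ _ IHk h1 h2 h3). wfs Hf; wfs Hg; wfs Hr. taut.
Qed.

Lemma st_good C : good (st b C).
Proof. intro l; split; [apply st_wf|apply st_bb; auto]. Qed.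

Lemma sound_K A B k : P (st b (MImp (MBox (MImp A B)) (MImp (MBox A) (MBox B))) k).
Proof.
  assert (h := LK (st b A) (st b B) (st_good A) (st_good B) k).
  simpl. apply (taut1 _ _ h). 
  assert (Hf := st_good A); assert (Hg := st_good B); assert (Hh := st_good (MImp A B)).
  destruct b; wfs Hf; wfs Hg; wfs Hh.
  destruct b; simpl; taut.
Qed.

Lemma sound_4 A k : P (st b (MImp (MBox A) (MBox (MBox A))) k).
Proof.
  assert (h := L4 (st b A) (st_good A) k).
  simpl. apply (taut1 _ _ h).
  assert (Hf := st_good A); assert (Hh := st_good (MBox A)).
  destruct b; wfs Hf; wfs Hh.
  destruct b; simpl; taut.
Qed.

Lemma sound_T A k : b = true -> P (st b (MImp (MBox A) A) k).
Proof.
  intro E. simpl. assert (Hf := st_good A). rewrite E in *. simpl. apply taut0. wfs Hf. taut.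


Qed.

Lemma sound (Y : mform -> Prop) : (forall C, Y C -> forall k, P (st b C k)) ->
  forall C, Lm Y C -> forall k, P (st b C k).
Proof.
  intros HY C H; induction H; intro k.
  - apply taut0. apply st_wf. intro v.
    set (v' := fun D => heval v (st b D k)).
    assert (E : forall D, meval v' D = heval v (st b D k)).
    { induction D; simpl; try reflexivity; try (rewrite IHD; reflexivity);
      try (rewrite IHD1, IHD2; reflexivity).
      }
    rewrite <- E. apply H.
  - apply HY; auto.
  - apply (Lh_mp X (st b A k)); [apply IHLm1|apply (IHLm2 k)].
  - simpl. apply (taut2 _ _ _ (bigbox_nec _ (st_good A) IHLm k) (IHLm k)).
    assert (Hf := st_good A); destruct b; wfs Hf.
    destruct b; taut.
Qed.

Ltac tautq E := let v := fresh "v" in intro v; simpl; rewrite ?heval_qconj, ?E;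
  repeat match goal with
  | |- context [heval v ?X] => destruct (heval v X)
  | |- context [v ?X] => destruct (v X)
  end; reflexivity.

Ltac w Hg := repeat first [assumption | apply (gw _ Hg) | apply (gb _ Hg); lia | apply (bw _ Hg)
  | apply (bbb _ Hg); lia | apply st_wf | apply st_bb; lia | eapply bb_mono; eauto; lia | exact I | split ].

Lemma equiv : forall A, wf A -> forall k, boxes_below k A ->
  P (HImp (st b (tr A) k) A) /\ P (HImp A (st b (tr A) k)).
Proof.
  induction A; intros WA k BA.
  - split; apply taut0; simpl; auto; taut.
  - split; apply taut0; simpl; auto; taut.
  - split; apply taut0; simpl; auto; taut.
  - destruct (IHA WA k BA) as [h1 h2]. simpl.
    split; [apply (taut1 _ _ h2)|apply (taut1 _ _ h1)]; simpl; auto using st_wf; taut.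
  - destruct WA, BA. destruct (IHA1 H k H1) as [h1 h2]. destruct (IHA2 H0 k H2) as [h3 h4].
    simpl. split; apply (taut4 _ _ _ _ _ h1 h2 h3 h4); simpl; auto using st_wf; taut.
  - destruct WA, BA. destruct (IHA1 H k H1) as [h1 h2]. destruct (IHA2 H0 k H2) as [h3 h4].
    simpl. split; apply (taut4 _ _ _ _ _ h1 h2 h3 h4); simpl; auto using st_wf; taut.
  - destruct WA, BA. destruct (IHA1 H k H1) as [h1 h2]. destruct (IHA2 H0 k H2) as [h3 h4].
    simpl. split; apply (taut4 _ _ _ _ _ h1 h2 h3 h4); simpl; auto using st_wf; taut.
  - destruct WA as [WB BnB]. destruct BA as [Hnk BkB].
    set (g := st b (MImp (qconj n) (tr A))).
    assert (Hg := st_good (MImp (qconj n) (tr A))). fold g in Hg.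
    change (st b (tr (HBox n A)) k) with (HAnd (bigbox g k) (rfl b (g k))).
    split.
    + assert (h1 := bigbox_elim g Hg k n Hnk).
      destruct (IHA WB n BnB) as [e _].
      assert (h2 : P (HImp (g n) A)).
      { apply (taut1 _ _ e). simpl; auto using st_wf. subst g.
        assert (E : Nat.leb n n = true) by apply Nat.leb_refl. tautq E. }
      assert (h3 := boxmono _ _ n h2 ltac:(apply (gb _ Hg); lia) BnB).
      apply (taut2 _ _ _ h1 h3). cbn [wf boxes_below]; w Hg. destruct b; cbn [wf rfl]; w Hg. taut.
    + assert (h1 : P (HImp (HBox n A) (bigbox g k))).
      { apply bigbox_intro; auto. simpl; auto. intros j Hj.
        destruct (Nat.lt_ge_cases j n) as [Hjn|Hjn].
        - assert (h : P (g j)).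
          { apply taut0. apply (gw _ Hg). subst g.
            assert (E : Nat.leb n j = false) by (apply Nat.leb_gt; lia). tautq E. }
          apply (taut1 _ _ (nec _ j h ltac:(apply (gb _ Hg); lia))).
          cbn [wf boxes_below]; w Hg. taut.
        - assert (h1 := Hiter' A n j Hjn WB BnB).
          destruct (IHA WB j ltac:(apply (bb_mono A n j BnB Hjn))) as [_ e].
          assert (h2 : P (HImp A (g j))).
          { apply (taut1 _ _ e). simpl; auto using st_wf. subst g. taut. }
          assert (h3 := boxmono _ _ j h2 ltac:(apply (bb_mono A n j BnB Hjn)) ltac:(apply (gb _ Hg); lia)).
          apply (taut2 _ _ _ h1 h3). cbn [wf boxes_below]; w Hg. taut. }
      assert (h2 : P (HImp (HBox n A) (rfl b (g k)))).
      { destruct b eqn:Eb; simpl.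
        - destruct (IHA WB k ltac:(apply (bb_mono A n k BnB); lia)) as [_ e].
          assert (hT : P (HImp (HBox n A) A)).
          { apply Lh_ax. simpl; auto. apply XT; auto. }
          apply (taut2 _ _ _ hT e). simpl; auto using st_wf. subst g. simpl. taut.
        - apply taut0. simpl; auto. taut. }
      apply (taut2 _ _ _ h1 h2). cbn [wf boxes_below]; w Hg. destruct b; cbn [wf rfl]; w Hg. taut.
Qed.

Lemma hbig_wf : forall D, (forall B, In B D -> wf B) -> wf (hbigand D).
Proof. induction D; simpl; auto. Qed.

Lemma hb : forall D k, (forall B, In B D -> wf B /\ boxes_below k B) ->
  P (HImp (hbigand D) (st b (mbigand (map tr D)) k)).
Proof.
  induction D as [|B D IH]; intros k HD.
  - apply taut0; simpl; auto; taut.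
  - simpl. destruct (HD B (or_introl eq_refl)) as [W1 W2].
    destruct (equiv B W1 k W2) as [_ e].
    assert (h := IH k ltac:(intros; apply HD; simpl; auto)).
    apply (taut2 _ _ _ e h). simpl. repeat split; auto using st_wf.
    apply hbig_wf; intros; apply HD; simpl; auto. taut.
Qed.

Lemma main_gen (Y : mform -> Prop) : (forall C, Y C -> forall k, P (st b C k)) ->
  forall Gamma A, (forall B, Gamma B -> wf B) -> wf A ->
  mderives (Lm Y) (trset Gamma) (tr A) -> hderives (Lh X) Gamma A.
Proof.
  intros HY Gamma A WG WA [Delta [HD HL]].
  assert (exists D', Delta = map tr D' /\ forall B, In B D' -> Gamma B) as [D' [E HD']].
  { clear HL. induction Delta as [|C Delta IH].
    - exists []; simpl; split; auto; tauto.
    - destruct (HD C (or_introl eq_refl)) as [B [GB EB]].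
      destruct IH as [D' [E HD']]. intros; apply HD; simpl; auto.
      exists (B :: D'); simpl; split. congruence. intros B' [<-|H]; auto. }
  subst Delta.
  assert (bound : forall A, exists n, boxes_below n A).
  { induction A0; simpl; try (exists 0; auto; fail).
    - auto.
    - destruct IHA0_1 as [n1 h1], IHA0_2 as [n2 h2]. exists (n1 + n2).
      split; eapply bb_mono; eauto; lia.
    - destruct IHA0_1 as [n1 h1], IHA0_2 as [n2 h2]. exists (n1 + n2).
      split; eapply bb_mono; eauto; lia.
    - destruct IHA0_1 as [n1 h1], IHA0_2 as [n2 h2]. exists (n1 + n2).
      split; eapply bb_mono; eauto; lia.
    - destruct IHA0 as [m h]. exists (S n + m). split; [lia|eapply bb_mono; eauto; lia]. }
  assert (exists k, boxes_below k A /\ forall B, In B D' -> boxes_below k B) as [k [Hk HkD]].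
  { clear HL HD. induction D' as [|B D' IH].
    - destruct (bound A) as [n h]; exists n; simpl; tauto.
    - destruct IH as [k [h1 h2]]. intros; apply HD'; simpl; auto.
      destruct (bound B) as [m h]. exists (k + m). split. eapply bb_mono; eauto; lia.
      intros B' [<-|H]. eapply bb_mono; eauto; lia. eapply bb_mono; eauto; lia. }
  exists D'. split; auto.
  assert (s := sound Y HY _ HL k). simpl in s.
  assert (h := hb D' k ltac:(intros; split; auto)).
  destruct (equiv A WA k Hk) as [e _].
  apply (taut3 _ _ _ _ h s e). simpl; split; auto. apply hbig_wf; auto. taut.
Qed.
End Hilbert.

Ltac axs := intros; first [ discriminate
  | solve [left; constructor] | solve [right; left; constructor] | solve [right; right; constructor]
  | solve [right; right; left; constructor] | solve [right; right; right; constructor] ].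

Theorem theorem3p11 (Gamma : hform -> Prop) (A : hform) :
  (forall B, Gamma B -> wf B) -> wf A ->
  (mderives K4Q (trset Gamma) (tr A) -> hderives K4h Gamma A) /\
  (mderives S4Q (trset Gamma) (tr A) -> hderives S4h Gamma A).
Proof.
  intros WG WA. split.
  - refine (main_gen K4h_axioms _ _ false _ _ _ Gamma A WG WA); try axs.
    intros C [HC|HC] k; inversion HC; subst.
    + apply sound_K; axs.
    + apply sound_4; axs.
  - refine (main_gen S4h_axioms _ _ true _ _ _ Gamma A WG WA); try axs.
    intros C [HC|[HC|HC]] k; inversion HC; subst.
    + apply sound_K; axs.
    + apply sound_4; axs.
    + apply sound_T; [axs|reflexivity].
Qed.
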